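(* Consider the homophily variant of the diffusion model described in the context, with homophily parameter $\gamma\in(0,1/s)$. Then: (i) For every $t\ge1$ there is $\underline H_t\in\mathbb R\cup\{-\infty\}$ with $D_n^t=\{i:H_i>\underline H_t\}$, and the thresholds can be chosen weakly decreasing in $t$. (ii) Let $0<\gamma<\gamma'<1/s$, and let $D_n^t(\gamma)$ and $D_n^t(\gamma')$ be the sets of new-product consumers under $\gamma$ and $\gamma'$ respectively, with all other parameters equal. Then $D_n^t(\gamma')\subseteq D_n^t(\gamma)$ for all $t\ge1$ (equivalently $\underline H_t$ is weakly increasing in $\gamma$ for $t\ge 2$). In words, stronger homophily slows diffusion.
   Context: Homophily variant. There are $N$ individuals partitioned into $G\ge2$ groups $N_1,\dots,N_G$, each of size $N/G$. Members of $N_k$ have aspiration level $H_{N_k}$, with $H_{N_1}>\cdots>H_{N_G}$; write $H_i$ for individual $i$'s level. The incumbent $p_c$ gives payoff $v_L$ to everyone, where $H_{N_2}<v_L<H_{N_1}$. The new product $p_n$ gives individual $i$ the payoff $v_{Hi}\ge H_{N_1}$. Product similarities are $s_{p_c,p_c}=s_{p_n,p_n}=1$, $s_{p_n,p_c}=s_p\in(0,1)$ and $s_{p_c,p_n}=0$. Individual similarities: $s_{i,i}=1$; $s_{i,j}=\gamma s$ if $i\ne j$ and $i,j$ lie in the same group; $s_{i,j}=s$ otherwise. Here $s\in(0,1]$ and $\gamma\in(0,1/s)$. Dynamics. In period $0$ everyone consumes $p_c$ ($D_c^0=\{1,\dots,N\}$, $D_n^0=\emptyset$). For $t\ge1$,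 $U_i^t(p_c)=\sum_{t'=0}^{t-1}\sum_{j\in D_c^{t'}}s_{i,j}(v_L-H_i)$ and $U_i^t(p_n)=s_pU_i^t(p_c)+\sum_{t'=0}^{t-1}\sum_{j\in D_n^{t'}}s_{i,j}(v_{Hj}-H_i)$. Individual $i\in D_n^t$ iff $U_i^t(p_n)>U_i^t(p_c)$; otherwise $i\in D_c^t$. *)

(* Defs.v *)
From HB Require Import structures.
From mathcomp Require Import all_boot all_order all_algebra.
From mathcomp Require Import reals constructive_ereal.
Set Implicit Arguments. Unset Strict Implicit. Unset Printing Implicit Defensive.
Import Order.TTheory GRing.Theory Num.Theory.
Local Open Scope ring_scope.

(* Individuals are pairs (k, m): k : 'I_G is the group, m : 'I_M the index
   inside the group; so N = G * M and each group has size M = N / G. *)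
Definition indiv (G M : nat) := ('I_G * 'I_M)%type.

Section Diffusion.
Variables (R : realType) (G M : nat).
(* H k = aspiration level of group N_{k+1}; vL = incumbent payoff;
   vH i = new-product payoff of individual i; sp = s_{p_n,p_c};
   s = cross-group similarity; gamma = homophily parameter. *)
Variables (H : 'I_G -> R) (vL : R) (vH : indiv G M -> R) (sp s gamma : R).

Definition sim (i j : indiv G M) : R :=
  if i == j then 1 else if i.1 == j.1 then gamma * s else s.

Definition Hi (i : indiv G M) : R := H i.1.

(* Given the history h = [:: D_n^0; ...; D_n^{t-1}] (with D_c^{t'} the
   complement of D_n^{t'}), the utilities U_i^t(p_c) and U_i^t(p_n). *)
Definition Uc (h : seq {set indiv G M}) (i : indiv G M) : R :=
  \sum_(D <- h) \sum_(j in ~: D) sim i j * (vL - Hi i).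

Definition Un (h : seq {set indiv G M}) (i : indiv G M) : R :=
  sp * Uc h i + \sum_(D <- h) \sum_(j in D) sim i j * (vH j - Hi i).

Definition next_adopters (h : seq {set indiv G M}) : {set indiv G M} :=
  [set i | Uc h i < Un h i].

Fixpoint hist (t : nat) : seq {set indiv G M} :=
  match t with
  | 0 => [:: set0]
  | t'.+1 => rcons (hist t') (next_adopters (hist t'))
  end.

Definition Dn (t : nat) : {set indiv G M} := last set0 (hist t).

End Diffusion.

(* Main.v *)
Require Import Defs.
From HB Require Import structures.
From mathcomp Require Import all_boot all_order all_algebra.
From mathcomp Require Import reals constructive_ereal.
From mathcomp Require Import ring lra.
Import Order.TTheory GRing.Theory Num.Theory.
Local Open Scope ring_scope.

Section Proof.
Variables (R : realType) (G M : nat) (H : 'I_G -> R) (vL : R)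
  (vH : indiv G M -> R) (sp s : R).

Definition gfun (g : R) (i : indiv G M) (D : {set indiv G M}) : R :=
  \sum_j (if j \in D then sim s g i j * (vH j - Hi H i)
          else (sp - 1) * (sim s g i j * (vL - Hi H i))).

Lemma UnUc g h i : Un H vL vH sp s g h i - Uc H vL s g h i = \sum_(D <- h) gfun g i D.
Proof.
rewrite /Un /Uc addrAC -{2}[\sum_(D <- h) _]mul1r -mulrBl.
rewrite big_distrr -big_split /=; apply: eq_bigr => D _.
rewrite addrC /gfun [RHS](bigID (fun j => j \in D)) /=; congr (_ + _).
  by apply: eq_bigr => j ->.
rewrite big_distrr /=; apply: eq_big => [j|j]; first by rewrite in_setC.
by rewrite in_setC => /negbTE ->.
Qed.

Lemma hist_map g t : hist H vL vH sp s g t = map (Dn H vL vH sp s g) (iota 0 t.+1).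
Proof.
elim: t => [//|t IH].
rewrite -addn1 (iotaD 0 t.+1 1) map_cat cats1 -IH addn1 /=; congr rcons.
by rewrite /Dn /= last_rcons.
Qed.

Lemma adoptE g t i : (i \in Dn H vL vH sp s g t.+1) =
  (0 < \sum_(u < t.+1) gfun g i (Dn H vL vH sp s g u)).
Proof.
rewrite {1}/Dn /= last_rcons inE -subr_gt0 UnUc hist_map big_map.
by rewrite -(big_mkord xpredT (fun u => gfun g i (Dn H vL vH sp s g u))) /index_iota subn0.
Qed.

Hypothesis hG : (2 <= G)%N.
Hypothesis hH : forall k l : 'I_G, (k < l)%N -> H l < H k.
Hypothesis h1 : forall k : 'I_G, val k = 1%N -> H k < vL.
Hypothesis h0 : forall k : 'I_G, val k = 0%N -> vL < H k.
Hypothesis hv : forall (i : indiv G M) (k : 'I_G), val k = 0%N -> H k <= vH i.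
Hypothesis hsp : 0 < sp < 1.
Hypothesis hs : 0 < s.

Let k0 : 'I_G := Ordinal (leq_trans (isT : (0 < 2)%N) hG).
Let k1 : 'I_G := Ordinal hG.

Lemma Hle_vH (i j : indiv G M) : Hi H i <= vH j.
Proof.
apply: le_trans (hv j k0 erefl); rewrite /Hi.
have [e|ne] := eqVneq (val i.1) 0%N.
  by have -> : i.1 = k0 by apply: val_inj.
by apply/ltW/hH; rewrite lt0n.
Qed.

Lemma top_gt (i : indiv G M) : val i.1 = 0%N -> vL < Hi H i.
Proof. exact: h0. Qed.

Lemma below_lt (i : indiv G M) : (0 < val i.1)%N -> Hi H i < vL.
Proof.
move=> pos; rewrite /Hi.
have [e|ne] := eqVneq (val i.1) 1%N; first exact: h1.
apply: lt_trans (h1 k1 erefl); apply: hH => /=.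
by rewrite ltn_neqAle eq_sym ne pos.
Qed.

Lemma sim_pos g (i j : indiv G M) : 0 < g -> 0 < sim s g i j.
Proof.
by move=> gp; rewrite /sim; case: (i == j) => //; case: (_ == _) => //; apply: mulr_gt0.
Qed.

Lemma gfun_mono g (i : indiv G M) (D D' : {set indiv G M}) : 0 < g -> (0 < val i.1)%N -> D \subset D' ->
  gfun g i D <= gfun g i D'.
Proof.
move=> gp pos sub; rewrite /gfun; apply: ler_sum => j _.
have sp0 := sim_pos g i j gp; have hb := below_lt i pos; have hj := Hle_vH i j.
case/andP: hsp => sp1 sp2.
case: (boolP (j \in D)) => jD; first by rewrite (subsetP sub _ jD).
case: (j \in D'); last by [].
have a : 0 <= sim s g i j * (vL - Hi H i) by apply: mulr_ge0; [exact: ltW | rewrite subr_ge0; exact: ltW].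
have b : 0 <= sim s g i j * (vH j - Hi H i) by apply: mulr_ge0; [exact: ltW | rewrite subr_ge0].
nra.
Qed.

Notation D g t := (Dn H vL vH sp s g t).

Lemma gfun_top_ge0 g (i : indiv G M) (X : {set indiv G M}) :
  0 < g -> val i.1 = 0%N -> 0 <= gfun g i X.
Proof.
move=> gp top; rewrite /gfun; apply: sumr_ge0 => j _.
have sp0 := sim_pos g i j gp; have ht := top_gt i top; have hj := Hle_vH i j.
case/andP: hsp => sp1 sp2.
case: (j \in X).
  by apply: mulr_ge0; [exact: ltW | rewrite subr_ge0].
have a : 0 <= sim s g i j * (Hi H i - vL) by apply: mulr_ge0; [exact: ltW | rewrite subr_ge0; exact: ltW].
nra.
Qed.

Lemma gfun_top_set0 g (i : indiv G M) :
  0 < g -> val i.1 = 0%N -> 0 < gfun g i set0.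
Proof.
move=> gp top; rewrite /gfun (bigD1 i) //= in_set0.
have rest : 0 <= \sum_(j | j != i) (if j \in set0 then sim s g i j * (vH j - Hi H i)
          else (sp - 1) * (sim s g i j * (vL - Hi H i))).
  apply: sumr_ge0 => j _; rewrite in_set0.
  have sp0 := sim_pos g i j gp; have ht := top_gt i top.
  case/andP: hsp => sp1 sp2.
  have a : 0 <= sim s g i j * (Hi H i - vL) by apply: mulr_ge0; [exact: ltW | rewrite subr_ge0; exact: ltW].
  nra.
have -> : sim s g i i = 1 by rewrite /sim eqxx.
have ht := top_gt i top; case/andP: hsp => sp1 sp2.
nra.
Qed.

Lemma D0 g : D g 0 = set0.
Proof. by []. Qed.

Lemma top_adopt g t (i : indiv G M) : 0 < g -> val i.1 = 0%N -> i \in D g t.+1.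
Proof.
move=> gp top; rewrite adoptE big_ord_recl D0.
have a := gfun_top_set0 g i gp top.
have b : 0 <= \sum_(u < t) gfun g i (D g (bump 0 u)).
  by apply: sumr_ge0 => u _; apply: gfun_top_ge0.
lra.
Qed.

Lemma step g t : 0 < g -> (forall u, (u <= t)%N -> D g u \subset D g t) ->
  D g t \subset D g t.+1.
Proof.
move=> gp IH; case: t IH => [|t] IH; first by rewrite D0 sub0set.
apply/subsetP => i; have [top|pos] := eqVneq (val i.1) 0%N.
  by move=> _; apply: top_adopt.
rewrite -lt0n in pos.
rewrite (adoptE g t.+1) big_ord_recr /= adoptE => S0.
set x := gfun g i (D g t.+1).
have le : \sum_(u < t.+1) gfun g i (D g u) <= \sum_(u < t.+1) x.
  apply: ler_sum => u _; apply: gfun_mono => //; apply: IH.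
  exact: ltnW (ltn_ord u).
rewrite sumr_const card_ord in le.
have : 0 < x *+ t.+1 by exact: lt_le_trans le.
rewrite pmulrn_lgt0 // => xp.
lra.
Qed.

Lemma chain g t u : 0 < g -> (u <= t)%N -> D g u \subset D g t.
Proof.
move=> gp; elim: t u => [|t IH] u.
  by rewrite leqn0 => /eqP ->; exact: subxx.
rewrite leq_eqVlt => /orP [/eqP -> |ut]; first exact: subxx.
exact: subset_trans (IH u ut) (step g t gp IH).
Qed.

Lemma Dn1 g (i : indiv G M) : 0 < g -> (i \in D g 1) = (val i.1 == 0%N).
Proof.
move=> gp; have [top|pos] := eqVneq (val i.1) 0%N; first exact: top_adopt.
rewrite -lt0n in pos; apply/negbTE; rewrite adoptE big_ord1 D0 -leNgt.
apply: sumr_le0 => j _; rewrite in_set0.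
have sp0 := sim_pos g i j gp; have hb := below_lt i pos.
case/andP: hsp => sp1 sp2.
have a : 0 <= sim s g i j * (vL - Hi H i) by apply: mulr_ge0; [exact: ltW | rewrite subr_ge0; exact: ltW].
nra.
Qed.

Definition Wc g : R := s *+ #|{: indiv G M}| + (g * s - s) *+ M + (1 - g * s).

Lemma W_eq g (x : indiv G M) : \sum_l sim s g x l = Wc g.
Proof.
have E : forall l, sim s g x l = s + (if x.1 == l.1 then g * s - s else 0)
    + (if x == l then 1 - g * s else 0).
  move=> l; rewrite /sim; case: eqP => [<-|_]; first by rewrite eqxx; ring.
  by case: (x.1 == l.1); ring.
rewrite (eq_bigr _ (fun l _ => E l)) !big_split /= sumr_const /Wc.
congr (_ + _ + _).
  have -> : \sum_(l : indiv G M) (if x.1 == l.1 then g * s - s else 0) =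
     \sum_(k : 'I_G) \sum_(m : 'I_M) (if x.1 == k then g * s - s else 0)
    by rewrite pair_big.
  rewrite (bigD1 x.1) //= eqxx sumr_const card_ord big1 ?addr0 //.
  by move=> k /negbTE; rewrite eq_sym => ->; rewrite big1.
rewrite (bigD1 x) //= eqxx big1 ?addr0 //.
by move=> l /negbTE; rewrite eq_sym => ->.
Qed.

Definition phi g (X : {set indiv G M}) (c : R) : R :=
  s * (\sum_(l in X) vH l) - s * #|X|%:R * c + (sp - 1) * (vL - c) * (Wc g - s * #|X|%:R).

Lemma gfun_formula g (x : indiv G M) (X : {set indiv G M}) :
  (forall l, l \in X -> (val l.1 < val x.1)%N) -> gfun g x X = phi g X (Hi H x).
Proof.
move=> hX.
have simD : forall l, l \in X -> sim s g x l = s.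
  move=> l lX; have lt := hX l lX; rewrite /sim.
  have -> : (x == l) = false.
    by apply/negbTE; apply: contraTneq lt => ->; rewrite ltnn.
  have -> : (x.1 == l.1) = false.
    by apply/negbTE; apply: contraTneq lt => ->; rewrite ltnn.
  by [].
have A1 : \sum_(l in X) (if l \in X then sim s g x l * (vH l - Hi H x)
          else (sp - 1) * (sim s g x l * (vL - Hi H x)))
        = s * (\sum_(l in X) vH l) - s * #|X|%:R * Hi H x.
  rewrite (eq_bigr (fun l => s * vH l - s * Hi H x)); last first.
    by move=> l lX; rewrite lX simD // mulrBr.
  rewrite sumrB -big_distrr sumr_const /=; congr (_ - _).
  by rewrite -mulr_natr; ring.
have A2 : \sum_(l | l \notin X) (if l \in X then sim s g x l * (vH l - Hi H x)
          else (sp - 1) * (sim s g x l * (vL - Hi H x)))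
        = (sp - 1) * (vL - Hi H x) * \sum_(l | l \notin X) sim s g x l.
  rewrite big_distrr /=; apply: eq_bigr => l /negbTE ->; ring.
have A3 : \sum_(l | l \notin X) sim s g x l = Wc g - s * #|X|%:R.
  have B : \sum_(l in X) sim s g x l = s * #|X|%:R.
    by rewrite (eq_bigr (fun _ => s)) ?sumr_const ?mulr_natr // => l lX; rewrite simD.
  rewrite -(W_eq g x) [in RHS](bigID (fun l => l \in X)) /= B; ring.
rewrite /gfun (bigID (fun l => l \in X)) /=.
rewrite (f_equal2 +%R A1 A2) A3 /phi; ring.
Qed.

Definition Pref (X : {set indiv G M}) := forall i j : indiv G M,
  i \in X -> (val j.1 <= val i.1)%N -> j \in X.

Lemma Hmono (i j : indiv G M) : (val j.1 <= val i.1)%N -> Hi H i <= Hi H j.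
Proof.
rewrite leq_eqVlt => /orP [/eqP e|lt]; last exact/ltW/hH.
by rewrite /Hi; have -> : j.1 = i.1 by apply: val_inj.
Qed.

Lemma phiL_ge0 g X : 0 <= phi g X vL.
Proof.
rewrite /phi subrr mulr0 mul0r addr0 -mulrA -mulrBr.
apply: mulr_ge0; first exact: ltW.
rewrite subr_ge0 mulr_natl -sumr_const; apply: ler_sum => l _.
exact: ltW (lt_le_trans (h0 k0 erefl) (hv l k0 erefl)).
Qed.

Lemma affine g X a b : (vL - a) * phi g X b = (vL - b) * phi g X a + (b - a) * phi g X vL.
Proof. by rewrite /phi; ring. Qed.

Lemma pref_all g t : 0 < g -> forall u, (u <= t)%N -> Pref (D g u).
Proof.
move=> gp; elim: t => [|t IH] w.
  by rewrite leqn0 => /eqP -> i j; rewrite D0 in_set0.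
rewrite leq_eqVlt => /orP [/eqP ->|wt]; last exact: IH.
move=> i j; rewrite adoptE => Si ji.
have [top|posj] := eqVneq (val j.1) 0%N; first exact: top_adopt.
rewrite -lt0n in posj; have posi := leq_trans posj ji.
have [/existsP [v ju]|/existsPn nex] := boolP [exists u : 'I_t.+1, j \in D g u].
  apply: (subsetP (chain g t.+1 v gp _)) ju; exact: ltnW (ltn_ord v).
have hl : forall (u : 'I_t.+1) l, l \in D g u -> (val l.1 < val j.1)%N.
  move=> u l lu; rewrite ltnNge; apply/negP => jl.
  by move: (nex u); rewrite (IH u (ltn_ord u) l j lu jl).
rewrite adoptE.
rewrite (eq_bigr (fun u : 'I_t.+1 => phi g (D g u) (Hi H i))) in Si; last first.
  by move=> u _; apply: gfun_formula => l lu; exact: leq_trans (hl u l lu) ji.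
rewrite (eq_bigr (fun u : 'I_t.+1 => phi g (D g u) (Hi H j))); last first.
  by move=> u _; apply: gfun_formula => l lu; exact: hl u l lu.
set Sj := \sum_(u < t.+1) _; set SL := \sum_(u < t.+1) phi g (D g u) vL.
set Si' := \sum_(u < t.+1) _ in Si.
have id : (vL - Hi H i) * Sj = (vL - Hi H j) * Si' + (Hi H j - Hi H i) * SL.
  rewrite /Sj /Si' /SL !big_distrr -big_split; apply: eq_bigr => u _; exact: affine.
have SL0 : 0 <= SL by apply: sumr_ge0 => u _; exact: phiL_ge0.
have a := below_lt i posi; have b := below_lt j posj; have c := Hmono i j ji.
nra.
Qed.

Lemma phi_ge g g' X c : (0 < M)%N -> g < g' -> c < vL -> phi g' X c <= phi g X c.
Proof.
move=> M0 gg cv; rewrite -subr_ge0.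
have E : phi g X c - phi g' X c =
   ((1 - sp) * (vL - c)) * ((g' - g) * s) * (M%:R - 1).
  rewrite /phi /Wc; ring.
rewrite E; case/andP: hsp => sp1 sp2.
apply: mulr_ge0; first apply: mulr_ge0.
- by apply: mulr_ge0; rewrite subr_ge0 ltW.
- by apply: mulr_ge0; [rewrite subr_ge0 ltW | exact: ltW].
- by rewrite subr_ge0 ler1n.
Qed.

Lemma homophily g g' t : 0 < g -> g < g' -> forall u, (u <= t)%N -> D g' u \subset D g u.
Proof.
move=> gp gg; have gp' := lt_trans gp gg.
elim: t => [|t IH] w.
  by rewrite leqn0 => /eqP ->; rewrite D0 sub0set.
rewrite leq_eqVlt => /orP [/eqP ->|wt]; last exact: IH.
apply/subsetP => i; rewrite adoptE => Si.
have [top|posi] := eqVneq (val i.1) 0%N; first exact: top_adopt.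
rewrite -lt0n in posi.
have [/existsP [v iv]|/existsPn nex] := boolP [exists v : 'I_t.+1, i \in D g' v].
  apply: (subsetP (chain g t.+1 v gp _)); last exact: (subsetP (IH v (ltn_ord v)) _ iv).
  exact: ltnW (ltn_ord v).
have hl : forall (v : 'I_t.+1) l, l \in D g' v -> (val l.1 < val i.1)%N.
  move=> v l lv; rewrite ltnNge; apply/negP => il.
  by move: (nex v); rewrite (pref_all g' t gp' v (ltn_ord v) l i lv il).
rewrite adoptE.
have M0 : (0 < M)%N := leq_ltn_trans (leq0n _) (ltn_ord i.2).
rewrite (eq_bigr (fun v : 'I_t.+1 => phi g' (D g' v) (Hi H i))) in Si; last first.
  by move=> v _; apply: gfun_formula => l lv; exact: hl v l lv.
apply: (lt_le_trans Si).
apply: le_trans (_ : \sum_(v < t.+1) phi g (D g' v) (Hi H i) <= _).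
  apply: ler_sum => v _; apply: phi_ge => //; exact: below_lt.
apply: ler_sum => v _.
rewrite -gfun_formula; last by move=> l lv; exact: hl v l lv.
apply: gfun_mono => //; exact: IH (ltn_ord v).
Qed.
End Proof.

Theorem proposition4 (R : realType) (G M : nat)
  (H : 'I_G -> R) (vL : R) (vH : indiv G M -> R) (sp s gamma : R) :
  (2 <= G)%N ->
  (forall k l : 'I_G, (k < l)%N -> H l < H k) ->
  (forall k : 'I_G, val k = 1%N -> H k < vL) ->
  (forall k : 'I_G, val k = 0%N -> vL < H k) ->
  (forall (i : indiv G M) (k : 'I_G), val k = 0%N -> H k <= vH i) ->
  0 < sp < 1 ->
  0 < s <= 1 ->
  0 < gamma < s^-1 ->
  (* (i) threshold structure, thresholds weakly decreasing in t *)
  (exists th : nat -> \bar R,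
     (forall t, (1 <= t)%N ->
        th t != +oo%E /\
        Dn H vL vH sp s gamma t = [set i | (th t < (Hi H i)%:E)%E]) /\
     (forall t, (1 <= t)%N -> (th t.+1 <= th t)%E)) /\
  (* (ii) stronger homophily slows diffusion *)
  (forall gamma' : R, gamma < gamma' < s^-1 ->
     forall t, (1 <= t)%N ->
       Dn H vL vH sp s gamma' t \subset Dn H vL vH sp s gamma t).
Proof.
move=> hG hH h1 h0 hv hsp /andP [hs _] /andP [gp _].
set th := fun t => \big[Order.max/-oo%E]_(i | i \notin Dn H vL vH sp s gamma t) (Hi H i)%:E.
split; last first.
  move=> g' /andP [gg _] t _.
  exact: (@homophily _ _ _ _ _ _ _ _ hG hH h1 h0 hv hsp hs gamma g' t gp gg t (leqnn t)).
exists th; split.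
  move=> t t1; split.
    apply/negbT; apply: lt_eqF; apply/bigmax_ltP; split => // j _; exact: ltry.
  apply/setP => i; rewrite inE.
  case: (boolP (i \in Dn H vL vH sp s gamma t)) => iD.
    apply/esym/bigmax_ltP; split; first exact: ltNyr.
    move=> j jD; rewrite lte_fin /Hi; apply: (hH); rewrite ltnNge; apply/negP => ji.
    by move: jD; rewrite (@pref_all _ _ _ _ _ _ _ _ hG hH h1 h0 hv hsp hs gamma t gp t (leqnn t) i j iD ji).
  apply/esym/negbTE; rewrite -leNgt; exact: le_bigmax_cond.
move=> t t1; apply/bigmax_leP; split; first exact: leNye.
move=> j jD; apply: le_bigmax_cond; apply: contra jD.
by apply/subsetP; apply: (@chain _ _ _ _ _ _ _ _ hG hH h1 h0 hv hsp hs gamma t.+1 t gp (leqnSn t)).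
Qed.
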